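(* Let $m>1$ be odd, $a=\frac{m+1}2$, $\bar i=m+1-i$ for $i\in[m]$, and $\kappa=\frac{m^2-1}2$. A set $S\subseteq O_m$ is valid if and only if all of the following hold: (1) $\{(i,j)\in O_m:(i<j\text{ and }i<\bar j)\text{ or }(i>j\text{ and }i>\bar j)\}\subseteq S$; (2) $\{(i,j)\in O_m:(i>j\text{ and }i<\bar j)\text{ or }(i<j\text{ and }i>\bar j)\}\cap S=\emptyset$; (3) for each $1\le i\le\frac{m-1}2$ exactly one of the following holds: (a) $\{(i,i),(\bar i,\bar i)\}\subseteq S$ and $\{(i,\bar i),(\bar i,i)\}\cap S=\emptyset$; (b) $\{(i,\bar i),(\bar i,i)\}\subseteq S$ and $\{(i,i),(\bar i,\bar i)\}\cap S=\emptyset$. In particular there are exactly $2^{(m-1)/2}$ valid sets.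
   Context: $O_m=([m]\times[m])\setminus\{(a,a)\}$. Let $\tau:O_m\to O_m$, $\tau(i,j)=(j,\bar i)$, extended to subsets elementwise, and $\iota(S)=O_m\setminus S$ for $S\subseteq O_m$. A subset $S\subseteq O_m$ is valid if (i) $|S|=\kappa$, (ii) $\tau(S)=\iota(S)$, and (iii) for every $i\in[m]$, $|\{j:(i,j)\in S\}|=|i-\bar i|$. *)

(* Defs.v *)
(* Indices of [m] = {1,...,m} are encoded 0-based as 'I_m:
   the ordinal k stands for k+1. Then  bar i = m+1-i  becomes  rev_ord i
   (value m-1-k), the centre a=(m+1)/2 becomes the ordinal of value (m-1)/2,
   and order/distances are preserved by the shift. *)
From mathcomp Require Import all_boot.
Set Implicit Arguments. Unset Strict Implicit. Unset Printing Implicit Defensive.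

Definition natdist (x y : nat) : nat := (x - y) + (y - x).

Section Defs.
Variable m : nat.

Definition bar (i : 'I_m) : 'I_m := rev_ord i.

Definition centre : nat := (m - 1)./2.

Definition Om : {set 'I_m * 'I_m} :=
  [set p | ~~ ((val p.1 == centre) && (val p.2 == centre))].

Definition tau (p : 'I_m * 'I_m) : 'I_m * 'I_m := (p.2, bar p.1).

Definition kappa : nat := (m ^ 2 - 1)./2.

Definition valid (S : {set 'I_m * 'I_m}) : bool :=
  [&& S \subset Om,
      #|S| == kappa,
      tau @: S == Om :\: S &
      [forall i : 'I_m, #|[set j : 'I_m | (i, j) \in S]| == natdist i (bar i)]].

Definition cond1 (S : {set 'I_m * 'I_m}) : bool :=
  [set p in Om | ((p.1 < p.2) && (p.1 < bar p.2)) || ((p.1 > p.2) && (p.1 > bar p.2))]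
    \subset S.

Definition cond2 (S : {set 'I_m * 'I_m}) : bool :=
  [set p in Om | ((p.1 > p.2) && (p.1 < bar p.2)) || ((p.1 < p.2) && (p.1 > bar p.2))]
    :&: S == set0.

Definition cond3a (S : {set 'I_m * 'I_m}) (i : 'I_m) : bool :=
  ([set (i, i); (bar i, bar i)] \subset S) && ([set (i, bar i); (bar i, i)] :&: S == set0).

Definition cond3b (S : {set 'I_m * 'I_m}) (i : 'I_m) : bool :=
  ([set (i, bar i); (bar i, i)] \subset S) && ([set (i, i); (bar i, bar i)] :&: S == set0).

(* for 1 <= i <= (m-1)/2 (i.e. 0-based i < (m-1)/2) exactly one of (a),(b) *)
Definition cond3 (S : {set 'I_m * 'I_m}) : Prop :=
  forall i : 'I_m, i < (m - 1)./2 -> xorb (cond3a S i) (cond3b S i).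

End Defs.

(* Main.v *)
Require Import Defs.
From mathcomp Require Import all_boot zify.
Set Implicit Arguments. Unset Strict Implicit. Unset Printing Implicit Defensive.

Lemma card_ordP n (P : pred nat) : #|[set j : 'I_n | P j]| = count P (iota 0 n).
Proof.
rewrite -val_enum_ord count_map enumT cardE /enum_mem size_filter.
apply: eq_count => j /=. by rewrite !inE.
Qed.

Lemma count_int n a b : b <= n -> count (fun j => a <= j < b) (iota 0 n) = b - a.
Proof.
move=> hb. rewrite -(subnKC hb) iotaD count_cat add0n.
rewrite [X in _ + X](eq_in_count (a2 := pred0)) ?count_pred0; last first.
  move=> x; rewrite mem_iota /=; lia.
rewrite addn0.
case: (leqP a b) => hab.
  rewrite -(subnKC hab) iotaD count_cat add0n.
  rewrite [X in X + _](eq_in_count (a2 := pred0)) ?count_pred0; last by move=> x; rewrite mem_iota /=; lia.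
  rewrite (eq_in_count (a2 := predT)); last by move=> x; rewrite mem_iota /=; lia.
  rewrite count_predT size_iota. lia.
rewrite (eq_in_count (a2 := pred0)) ?count_pred0; last by move=> x; rewrite mem_iota /=; lia.
lia.
Qed.

Lemma setI2_eq0 (T : finType) (a b : T) (S : {set T}) :
  ([set a; b] :&: S == set0) = (a \notin S) && (b \notin S).
Proof.
apply/eqP/andP.
  move=> h; split; apply/negP => xS.
    have: a \in [set a; b] :&: S by rewrite !inE eqxx xS.
    by rewrite h inE.
  have: b \in [set a; b] :&: S by rewrite !inE eqxx xS orbT.
  by rewrite h inE.
case=> ha hb; apply/setP => x; rewrite !inE.
apply/negbTE/negP => /andP[/orP[] /eqP -> ]; [by rewrite (negbTE ha) | by rewrite (negbTE hb)].
Qed.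

Section Main.
Variable m : nat.
Hypothesis hodd : odd m.
Local Notation c := (centre m).

Lemma mE : m = c.*2.+1.
Proof. have := odd_double_half m; rewrite hodd /centre /=; lia. Qed.

Definition dl (i : 'I_m) := minn i (m - i.+1).
Definition E (Q : 'I_m -> bool) (p : 'I_m * 'I_m) :=
  (dl p.1 < dl p.2) || ((dl p.1 == dl p.2) && ((p.1 == p.2) == Q p.1)).

Lemma oeq (i j : 'I_m) : (i == j) = (nat_of_ord i == nat_of_ord j). Proof. by []. Qed.
Lemma barE (i : 'I_m) : nat_of_ord (bar i) = m - i.+1. Proof. by []. Qed.
Lemma barK (i : 'I_m) : bar (bar i) = i. Proof. exact: rev_ordK. Qed.

Ltac ordb := repeat match goal with x : _ |- _ =>
  lazymatch goal with _ : is_true (nat_of_ord x < _) |- _ => fail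
  | _ => have := ltn_ord x; move=> ? end end.
Ltac olia := have := mE; rewrite ?oeq ?barE /dl /=; ordb; lia.

Lemma dl_bar i : dl (bar i) = dl i. Proof. olia. Qed.
Lemma dl_le i : dl i <= c. Proof. olia. Qed.
Lemma dl_eq (i j : 'I_m) : dl i = dl j -> j = i \/ j = bar i.
Proof.
move=> h; have: (nat_of_ord j == nat_of_ord i) || (nat_of_ord j == m - i.+1) by move: h; olia.
by case/orP => /eqP h'; [left|right]; apply: val_inj.
Qed.
Lemma inOm (i j : 'I_m) : ((i, j) \in Om m) = ~~ ((nat_of_ord i == c) && (nat_of_ord j == c)).
Proof. by rewrite inE. Qed.

Lemma tau_inj : injective (@tau m).
Proof. move=> [a b] [a2 b2] [-> h]; congr (_,_); apply: val_inj; move: h; olia. Qed.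
Lemma tau4 (p : 'I_m * 'I_m) : tau (tau (tau (tau p))) = p.
Proof. by case: p => a b; rewrite /tau /= !barK. Qed.
Lemma tauOm (p : 'I_m * 'I_m) : (tau p \in Om m) = (p \in Om m).
Proof. case: p => a b; rewrite /tau /= !inOm; apply/idP/idP; olia. Qed.


Definition symQ (Q : 'I_m -> bool) := forall i, Q (bar i) = Q i.
Definition chS (S : {set 'I_m * 'I_m}) Q := forall p, p \in Om m -> (p \in S) = E Q p.

Lemma part_of (S : {set 'I_m * 'I_m}) : S \subset Om m ->
  (forall p, p \in Om m -> (tau p \in S) = ~~ (p \in S)) -> (@tau m) @: S = Om m :\: S.
Proof.
move=> sub hp; apply/setP => q; rewrite inE; apply/imsetP/andP.
  case=> p pS ->; split; first by rewrite hp ?pS // (subsetP sub).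
  by rewrite tauOm (subsetP sub).
case=> qnS qOm; exists (tau (tau (tau q))); last by rewrite tau4.
have h := hp (tau (tau (tau q))); rewrite tau4 in h.
by move: qnS; rewrite h ?negbK // !tauOm.
Qed.

Lemma part_to (S : {set 'I_m * 'I_m}) : S \subset Om m -> (@tau m) @: S = Om m :\: S ->
  forall p, p \in Om m -> (tau p \in S) = ~~ (p \in S).
Proof.
move=> sub hS p pO.
have key : forall q, q \in Om m -> (q \in S) = ~~ (q \in (@tau m) @: S).
  by move=> q qO; rewrite hS inE qO andbT negbK.
by rewrite [LHS]key ?tauOm // (mem_imset _ _ tau_inj).
Qed.

Lemma card_Om : #|Om m| = m * m - 1.
Proof.
have cm : c < m by have := mE; lia.
have -> : Om m = [set~ (Ordinal cm, Ordinal cm)].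
  apply/setP => -[i j]; rewrite inOm !inE xpair_eqE !oeq /=. by [].
by rewrite cardsC1 card_prod !card_ord; lia.
Qed.

Lemma card_part (S : {set 'I_m * 'I_m}) : S \subset Om m -> (@tau m) @: S = Om m :\: S ->
  #|S| = kappa m.
Proof.
move=> sub hS.
have h1 : #|(@tau m) @: S| = #|S| by rewrite card_imset //; exact: tau_inj.
have h2 : #|Om m :\: S| = #|Om m| - #|S|.
  by rewrite cardsD (setIidPr sub).
have h3 := card_Om.
have h4 : #|S| <= #|Om m| by apply: subset_leq_card.
have e2 : m ^ 2 = m * m by rewrite expnS expn1.
rewrite hS in h1; rewrite /kappa e2; move: (m * m) h3 => M h3; rewrite h1 in h2. have -> : M - 1 = #|S|.*2 by rewrite -addnn; lia.
by rewrite doubleK.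
Qed.


Lemma Om_ne (i j : 'I_m) : (i, j) \in Om m -> dl i = dl j -> nat_of_ord i != c.
Proof. rewrite inOm => h e; move: h e; olia. Qed.

Lemma ch_part (S : {set 'I_m * 'I_m}) Q : S \subset Om m -> symQ Q -> chS S Q ->
  forall p, p \in Om m -> (tau p \in S) = ~~ (p \in S).
Proof.
move=> sub sQ hS [i j] pO; rewrite !hS ?tauOm // /E /= dl_bar.
case: (ltngtP (dl i) (dl j)) => h //=.
have hic := Om_ne pO h.
have ib : (i == bar i) = false by move: hic; olia.
case: (dl_eq h) => ej; subst j.
  by rewrite ib eqxx; case: (Q i).
by rewrite eqxx ib sQ; case: (Q i).
Qed.

Lemma rows_ch (S : {set 'I_m * 'I_m}) Q : S \subset Om m -> symQ Q -> chS S Q ->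
  forall i, #|[set j | (i, j) \in S]| = natdist i (bar i).
Proof.
move=> sub sQ hS i.
case: (eqVneq (nat_of_ord i) c) => hic.
  have -> : [set j | (i, j) \in S] = set0.
    apply/setP => j; rewrite !inE.
    case hO: ((i, j) \in Om m); last by apply/negP => /(subsetP sub); rewrite hO.
    rewrite hS // /E /=.
    have h1 : (dl i < dl j) = false by move: hO; rewrite inOm; olia.
    have h2 : (dl i == dl j) = false by move: hO; rewrite inOm; olia.
    by rewrite h1 h2.
  by rewrite cards0 /natdist; move: hic; olia.
pose o := if Q i then bar i else i.
have -> : [set j | (i, j) \in S] = [set j : 'I_m | dl i <= j < m - dl i] :\ o.
  apply/setP => j; rewrite !inE hS; last by rewrite inOm; move: hic; olia.
  rewrite /E /o /=.
  by case: (Q i); move: hic; olia.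
have := cardsD1 o [set j : 'I_m | dl i <= j < m - dl i].
rewrite (card_ordP _ (fun j => dl i <= j < m - dl i)) count_int; last by olia.
rewrite inE (_ : dl i <= o < m - dl i); last by rewrite /o; case: (Q i); olia.
by rewrite /natdist; move: hic; olia.
Qed.

Lemma ch_valid (S : {set 'I_m * 'I_m}) Q : S \subset Om m -> symQ Q -> chS S Q -> valid S.
Proof.
move=> sub sQ hS.
have hp := part_of sub (ch_part sub sQ hS).
apply/and4P; split => //.
  by apply/eqP; apply: card_part.
  by apply/eqP.
by apply/forallP => i; apply/eqP; apply: rows_ch sQ hS i.
Qed.


Lemma chE_eq (S : {set 'I_m * 'I_m}) Q i j : chS S Q -> (i, j) \in Om m -> dl i = dl j ->
  ((i, j) \in S) = ((i == j) == Q i).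
Proof. by move=> hS pO h; rewrite hS // /E /= h ltnn eqxx. Qed.

Lemma ch_conds (S : {set 'I_m * 'I_m}) Q : S \subset Om m -> symQ Q -> chS S Q ->
  [/\ cond1 S, cond2 S & cond3 S].
Proof.
move=> sub sQ hS; split.
- apply/subsetP => -[i j]; rewrite inE => /andP[pO h].
  rewrite hS // /E /=.
  have -> : dl i < dl j by move: h; olia.
  by [].
- apply/eqP/setP => -[i j]; rewrite in_setI in_set0.
  apply/negbTE/negP => /andP[]; rewrite inE => /andP[pO h].
  rewrite hS // /E /=.
  have -> : (dl i < dl j) = false by move: h; olia.
  by have -> : (dl i == dl j) = false by move: h; olia.
- move=> i hi.
  have ib : (i == bar i) = false by move: hi; olia.
  have bi : (bar i == i) = false by move: hi; olia.
  have o1 : (i, i) \in Om m by rewrite inOm; move: hi; olia.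
  have o2 : (bar i, bar i) \in Om m by rewrite inOm; move: hi; olia.
  have o3 : (i, bar i) \in Om m by rewrite inOm; move: hi; olia.
  have o4 : (bar i, i) \in Om m by rewrite inOm; move: hi; olia.
  have d1 : dl i = dl (bar i) by rewrite dl_bar.
  have e1 : ((i, i) \in S) = Q i by rewrite (chE_eq hS o1 erefl) eqxx.
  have e2 : ((bar i, bar i) \in S) = Q i by rewrite (chE_eq hS o2 erefl) eqxx sQ.
  have e3 : ((i, bar i) \in S) = ~~ Q i.
    by rewrite (chE_eq hS o3 d1) ib; case: (Q i).
  have e4 : ((bar i, i) \in S) = ~~ Q i.
    by rewrite (chE_eq hS o4 (esym d1)) bi sQ; case: (Q i).
  rewrite /cond3a /cond3b !subUset !sub1set !setI2_eq0 e1 e2 e3 e4.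
  by case: (Q i).
Qed.

Lemma corner (S : {set 'I_m * 'I_m}) (i : 'I_m) : cond3 S -> i < c ->
  [/\ ((bar i, bar i) \in S) = ((i, i) \in S), ((i, bar i) \in S) = ~~ ((i, i) \in S)
    & ((bar i, i) \in S) = ~~ ((i, i) \in S)].
Proof.
move=> h3 hi; move: (h3 i hi).
rewrite /cond3a /cond3b !subUset !sub1set !setI2_eq0.
by case: ((i, i) \in S); case: ((bar i, bar i) \in S); case: ((i, bar i) \in S);
  case: ((bar i, i) \in S).
Qed.

Lemma conds_ch (S : {set 'I_m * 'I_m}) : S \subset Om m -> cond1 S -> cond2 S -> cond3 S ->
  symQ (fun i => (i, i) \in S) /\ chS S (fun i => (i, i) \in S).
Proof.
move=> sub h1 h2 h3.
have low : forall i : 'I_m, nat_of_ord i != c -> exists2 i0 : 'I_m, i0 < c & (i = i0 \/ i = bar i0).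
  move=> i hic; case: (ltnP i c) => hi; first by exists i => //; left.
  exists (bar i); first by move: hi hic; olia.
  by right; rewrite barK.
split.
  move=> i /=; case: (eqVneq (nat_of_ord i) c) => hic.
    by have -> : bar i = i by apply: val_inj; move: hic; olia.
  have [i0 hi0 [->|->]] := low i hic; have [e1 e2 e3] := corner h3 hi0.
    by [].
  by rewrite barK.
move=> [i j] pO; rewrite /E /=.
case: (ltngtP (dl i) (dl j)) => h.
- apply: (subsetP h1); rewrite inE pO /=; move: h; olia.
- apply/negP => pS; move/eqP/setP: h2 => /(_ (i, j)); rewrite in_setI in_set0 pS andbT.
  by rewrite inE pO /=; move: h; olia.
- have hic := Om_ne pO h.
  case: (dl_eq h) => ej; subst j; first by rewrite eqxx; case: ((i, i) \in S).
  have ib : (i == bar i) = false by move: hic; olia.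
  rewrite ib.
  have [i0 hi0 [ei|ei]] := low i hic; subst i; have [e1 e2 e3] := corner h3 hi0.
    by rewrite e2; case: ((i0, i0) \in S).
  by rewrite barK e3 e1; case: ((i0, i0) \in S).
Qed.

Lemma sum_rows (S : {set 'I_m * 'I_m}) (w : 'I_m -> nat) :
  \sum_(p in S) w p.1 = \sum_i w i * #|[set j | (i, j) \in S]|.
Proof.
rewrite big_mkcond /=.
rewrite (eq_bigr (fun p => (fun i j => if (i, j) \in S then w i else 0) p.1 p.2)); last first.
  by move=> [i j] _.
rewrite -(pair_bigA _ (fun i j => if (i, j) \in S then w i else 0)) /=.
apply: eq_bigr => i _.
by rewrite -big_mkcond sum_nat_const cardsE mulnC.
Qed.


Lemma valid_ch (S : {set 'I_m * 'I_m}) : valid S ->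
  symQ (fun i => (i, i) \in S) /\ chS S (fun i => (i, i) \in S).
Proof.
case/and4P => sub /eqP hc /eqP hp /forallP hr.
have hpart := part_to sub hp.
pose Q0 := fun _ : 'I_m => false.
pose S0 := [set p in Om m | E Q0 p].
have sub0 : S0 \subset Om m by apply/subsetP => p; rewrite inE => /andP[].
have ch0 : chS S0 Q0 by move=> p pO; rewrite inE pO.
have sQ0 : symQ Q0 by [].
have hpart0 := ch_part sub0 sQ0 ch0.
have hc0 : #|S0| = kappa m by case/and4P: (ch_valid sub0 sQ0 ch0) => _ /eqP.
pose w := fun i : 'I_m => m - dl i.
have hsum : \sum_(p in S) w p.1 = \sum_(p in S0) w p.1.
  rewrite !sum_rows; apply: eq_bigr => i _.
  by rewrite (eqP (hr i)) (rows_ch sub0 sQ0 ch0).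
pose sg := fun p => if p \in S0 then p else tau p.
have sgS : forall p, p \in S -> sg p \in S0.
  move=> p pS; rewrite /sg; case: ifP => // /negbT h.
  by rewrite hpart0 // (subsetP sub).
have sginj : {in S &, injective sg}.
  move=> p q pS qS; rewrite /sg; case: ifP => hp0; case: ifP => hq0.
  - done.
  - by move=> e; move: pS; rewrite e hpart ?qS // (subsetP sub).
  - by move=> e; move: qS; rewrite -e hpart ?pS // (subsetP sub).
  - exact: tau_inj.
have himg : sg @: S = S0.
  apply/eqP; rewrite eqEcard; apply/andP; split.
    by apply/subsetP => q /imsetP[p pS ->]; exact: sgS.
  by rewrite card_in_imset // hc hc0.
have hle : forall p, p \in S -> w p.1 <= w (sg p).1 ?= iff (w p.1 == w (sg p).1).
  move=> [i j] pS; split => //; rewrite /sg; case: ifP => // hp0.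
  have pO := subsetP sub _ pS.
  by move: hp0; rewrite inE pO /E /tau /w /=; olia.
have heq : forall p, p \in S -> w p.1 = w (sg p).1.
  have := (leqif_sum hle).2.
  rewrite hsum -himg (big_imset _ sginj) eqxx => /esym/forallP h p pS.
  by apply/eqP; move: (h p); rewrite pS.
have hdl : forall p, p \in S -> dl p.1 <= dl p.2.
  move=> [i j] pS; have := heq _ pS; rewrite /sg; case: ifP => hp0.
    have pO := subsetP sub _ pS.
    by move: hp0; rewrite inE pO /E /=; olia.
  by rewrite /tau /w /=; olia.
have sQ : symQ (fun i => (i, i) \in S).
  move=> i /=; case: (eqVneq (nat_of_ord i) c) => hic.
    by have -> : bar i = i by apply: val_inj; move: hic; olia.
  have o1 : (i, i) \in Om m by rewrite inOm; move: hic; olia.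
  have o3 : (i, bar i) \in Om m by rewrite inOm; move: hic; olia.
  have := hpart _ o3; have := hpart _ o1; rewrite /tau /= => ->.
  by rewrite negbK.
split => //.
move=> [i j] pO; rewrite /E /=.
case: (ltngtP (dl i) (dl j)) => h.
- have := hpart _ pO; case hq: (tau (i, j) \in S).
    by move: (hdl _ hq); rewrite /tau /= dl_bar; move: h; olia.
  by move/esym/negbFE.
- apply/negP => /hdl /=; move: h; olia.
- have hic := Om_ne pO h.
  case: (dl_eq h) => ej; subst j; first by rewrite eqxx; case: ((i, i) \in S).
  have ib : (i == bar i) = false by move: hic; olia.
  have o1 : (i, i) \in Om m by rewrite inOm; move: hic; olia.
  rewrite ib; have := hpart _ o1; rewrite /tau /= => ->.
  by case: ((i, i) \in S).
Qed.

End Main.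

Theorem lemma6p6 (m : nat) (hodd : odd m) (hm : 1 < m) :
  (forall S : {set 'I_m * 'I_m}, S \subset Om m ->
     (valid S <-> [/\ cond1 S, cond2 S & cond3 S])) /\
  #|[set S : {set 'I_m * 'I_m} | valid S]| = 2 ^ ((m - 1)./2).
Proof.
split.
  move=> S sub; split.
    by move=> v; have [sQ hS] := valid_ch hodd v; exact (ch_conds hodd sub sQ hS).
  by case=> h1 h2 h3; have [sQ hS] := conds_ch hodd sub h1 h2 h3; exact (ch_valid hodd sub sQ hS).
have mE' := mE hodd.
pose c := centre m.
pose F := fun S : {set 'I_m * 'I_m} => [set i : 'I_m | (i < c) && ((i, i) \in S)].
pose L := [set i : 'I_m | i < c].
have cL : #|L| = c.
  have -> : L = [set i : 'I_m | 0 <= i < c] by apply/setP => i; rewrite !inE.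
  rewrite (card_ordP _ (fun i => 0 <= i < c)) count_int ?subn0 //.
  rewrite /c; lia.
have finj : {in [set S | valid S] &, injective F}.
  move=> S1 S2; rewrite !inE => v1 v2 eF.
  have [s1 c1] := valid_ch hodd v1; have [s2 c2] := valid_ch hodd v2.
  case/and4P: v1 => sub1 _ _ _; case/and4P: v2 => sub2 _ _ _.
  have base : forall i : 'I_m, i < c -> ((i, i) \in S1) = ((i, i) \in S2).
    by move=> i hi; have := congr1 (fun A : {set 'I_m} => i \in A) eF; rewrite /F !inE hi.
  have eQ : forall i : 'I_m, ((i, i) \in S1) = ((i, i) \in S2).
    move=> i; case: (ltngtP i c) => hi.
    - exact: base.
    - rewrite -s1 -s2; apply: base; rewrite barE /c; move: hi (ltn_ord i); lia.
    - have nO : (i, i) \notin Om m by rewrite inOm hi /c eqxx.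
      apply/idP/idP => h; [move: (subsetP sub1 _ h) | move: (subsetP sub2 _ h)];
        by rewrite (negbTE nO).
  apply/setP => p; case pO: (p \in Om m).
    by rewrite c1 // c2 // /E eQ.
  apply/idP/idP => h; [move: (subsetP sub1 _ h) | move: (subsetP sub2 _ h)];
    by rewrite pO.
have himg : F @: [set S | valid S] = powerset L.
  apply/setP => A; rewrite powersetE; apply/imsetP/idP.
    by case=> S _ ->; apply/subsetP => i; rewrite !inE => /andP[].
  move=> AL.
  pose QA := fun i : 'I_m => (i \in A) || (bar i \in A).
  pose SA := [set p in Om m | E QA p].
  have sA : SA \subset Om m by apply/subsetP => p; rewrite inE => /andP[].
  have sQA : symQ QA by move=> i; rewrite /QA barK orbC.
  have cA : chS SA QA by move=> p pO; rewrite inE pO.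
  exists SA; first by rewrite inE; exact (ch_valid hodd sA sQA cA).
  apply/setP => i; rewrite inE.
  case: (ltnP i c) => hi /=.
    have o1 : (i, i) \in Om m by rewrite inOm; move: hi; rewrite /c; lia.
    rewrite cA // /E /= ltnn eqxx /= /QA.
    have nb : bar i \notin A.
      by apply/negP => /(subsetP AL); rewrite inE barE /c; move: hi (ltn_ord i); lia.
    by rewrite eqxx (negbTE nb) orbF.
  by apply/negbTE/negP => /(subsetP AL); rewrite inE; move: hi; rewrite /c; lia.
by rewrite -(card_in_imset finj) himg card_powerset cL.
Qed.
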